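(* Fix $\varepsilon>0$, $w\in\mathbb{R}^L$ and $j\in[L]$. There is a unique $a\in\mathbb{R}$ satisfying $$w_j=a+\varepsilon/\sqrt2-\sum_{k\neq j}(w_k-a)_+.$$ Moreover, defining $v\in\mathbb{R}^L$ by $v_j=a+\varepsilon/\sqrt2$ and $v_k=\min\{a,w_k\}$ for $k\neq j$, $v$ is the (unique) Euclidean projection of $w$ onto $R_j^\varepsilon$, i.e. $v=\arg\min_{u\in R_j^\varepsilon}\|w-u\|$.
   Context: $(a)_+=\max\{a,0\}$, $\|\cdot\|$ the Euclidean norm, and $R_j^\varepsilon=\{u\in\mathbb{R}^L: u_j\ge\max_{\ell\neq j}u_\ell+\varepsilon/\sqrt2\}$. *)

(* Defs.v *)
From mathcomp Require Import all_boot all_order all_algebra.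
From mathcomp Require Import reals.
Set Implicit Arguments. Unset Strict Implicit. Unset Printing Implicit Defensive.
Import Order.TTheory GRing.Theory Num.Theory.
Local Open Scope ring_scope.

Definition pospart {R : realType} (a : R) : R := Num.max a 0.

Definition enorm {R : realType} {L : nat} (x : 'rV[R]_L) : R :=
  Num.sqrt (\sum_(i < L) x ord0 i ^+ 2).

(* R_j^eps = { u : u_j >= max_{l<>j} u_l + eps/sqrt 2 };
   with the max over the empty set read as -oo, this is literally
   "u_j >= u_l + eps/sqrt 2 for every l <> j". *)
Definition region {R : realType} {L : nat} (eps : R) (j : 'I_L) : 'rV[R]_L -> Prop :=
  fun u => forall l : 'I_L, l != j -> u ord0 l + eps / Num.sqrt 2 <= u ord0 j.

Definition is_unique_proj {R : realType} {L : nat} (S : 'rV[R]_L -> Prop)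
  (w v : 'rV[R]_L) : Prop :=
  S v /\ forall u, S u -> u <> v -> enorm (w - v) < enorm (w - u).

(* Main.v *)
Require Import Defs.
From mathcomp Require Import all_boot all_order all_algebra.
From mathcomp Require Import reals.
From mathcomp Require Import classical_sets.
From mathcomp Require Import ring lra.
Import Order.TTheory GRing.Theory Num.Theory.
Local Open Scope ring_scope.

Section Aux.
Variable R : realType.

Lemma pp_ge0 (x : R) : 0 <= pospart x.
Proof. by rewrite /pospart le_max lexx orbT. Qed.

Lemma pp_ge (x : R) : x <= pospart x.
Proof. by rewrite /pospart le_max lexx. Qed.

Lemma pp_mono (x y : R) : x <= y -> pospart x <= pospart y.
Proof.
move=> h; rewrite /pospart ge_max le_max h /= le_max lexx orbT //.
Qed.

Lemma pp_lip (x y : R) : x <= y -> pospart y <= pospart x + (y - x).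
Proof.
move=> h; rewrite {1}/pospart ge_max; apply/andP; split.
  have := pp_ge x; lra.
have := pp_ge0 x; lra.
Qed.

Lemma pp_min (x a : R) : x - Num.min a x = pospart (x - a).
Proof.
rewrite /pospart; case: (leP a x) => h.
  by rewrite max_l // subr_ge0.
by rewrite max_r ?subrr // subr_le0 ltW.
Qed.

Lemma pp_min0 (x a : R) : pospart (x - a) * (Num.min a x - a) = 0.
Proof.
rewrite /pospart; case: (leP a x) => h.
  by rewrite subrr mulr0.
by rewrite max_r ?mul0r // subr_le0 ltW.
Qed.

End Aux.
Arguments pp_ge0 {R}. Arguments pp_ge {R}. Arguments pp_mono {R}. Arguments pp_lip {R}. Arguments pp_min {R}. Arguments pp_min0 {R}.

Theorem lemma3 (R : realType) (L : nat) (eps : R) (w : 'rV[R]_L) (j : 'I_L) :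
  0 < eps ->
  (exists! a : R,
     w ord0 j = a + eps / Num.sqrt 2 - \sum_(k < L | k != j) pospart (w ord0 k - a)) /\
  (forall a : R,
     w ord0 j = a + eps / Num.sqrt 2 - \sum_(k < L | k != j) pospart (w ord0 k - a) ->
     is_unique_proj (region eps j) w
       (\row_(k < L) (if k == j then a + eps / Num.sqrt 2 else Num.min a (w ord0 k)))).
Proof.
move=> eps0.
set c := eps / Num.sqrt 2.
have c0 : 0 < c by rewrite /c divr_gt0 // sqrtr_gt0.
set F := fun a => \sum_(k < L | k != j) pospart (w ord0 k - a).
set K := \sum_(k < L | k != j) (1 : R).
have K0 : 0 <= K by apply: sumr_ge0.
have F0 : forall a, 0 <= F a by move=> a; apply: sumr_ge0 => k _; apply: pp_ge0.
have Fmono : forall a b, a <= b -> F b <= F a.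
  move=> a b ab; apply: ler_sum => k _; apply: pp_mono; lra.
have Flip : forall a b, a <= b -> F a <= F b + K * (b - a).
  move=> a b ab; rewrite /K mulr_suml -big_split /=; apply: ler_sum => k _.
  rewrite mul1r; have := pp_lip (w ord0 k - b) (w ord0 k - a).
  have -> : w ord0 k - a - (w ord0 k - b) = b - a by ring.
  by apply; lra.
set f := fun a => a + c - F a.
have fstrict : forall a b, a < b -> f a < f b.
  move=> a b ab; rewrite /f; have := Fmono a b (ltW ab); lra.
have flip : forall a b, a <= b -> f b <= f a + (1 + K) * (b - a).
  move=> a b ab; rewrite /f; have := Flip a b ab; lra.
split.
  set A : set R := fun x => f x <= w ord0 j.
  have Ane : (A !=set0)%classic.
    exists (w ord0 j - c); rewrite /A /= /f; have := F0 (w ord0 j - c); lra.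
  set B := w ord0 j - c + F (w ord0 j - c).
  have Aub : forall x, A x -> x <= B.
    move=> x; rewrite /A /= => hx; rewrite leNgt; apply/negP => hB.
    have := fstrict _ _ hB; rewrite /f /B.
    have := Fmono (w ord0 j - c) B; rewrite /B.
    have := F0 (w ord0 j - c); move=> h0 h1; have := h1 ltac:(lra).
    move: hx; rewrite /f; lra.
  have hs : has_sup A by split => //; exists B => x; apply: Aub.
  set s := sup A.
  have ub := sup_upper_bound hs.
  have D0 : 0 < 1 + K by lra.
  have fs : w ord0 j = f s.
    apply/eqP; rewrite eq_le; apply/andP; split.
      rewrite leNgt; apply/negP => hlt.
      pose d := (w ord0 j - f s) / (1 + K).
      have d0 : 0 < d by rewrite /d divr_gt0 // subr_gt0.
      have : A (s + d).
        rewrite /A /=; have := flip s (s + d) ltac:(lra).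
        have -> : (1 + K) * (s + d - s) = w ord0 j - f s.
          by rewrite /d addrAC subrr add0r mulrC divfK // gt_eqF.
        rewrite /f; lra.
      move/ub => hh; have hh2 : s + d <= s := hh; lra.
    rewrite leNgt; apply/negP => hlt.
    pose d := (f s - w ord0 j) / (1 + K).
    have d0 : 0 < d by rewrite /d divr_gt0 // subr_gt0.
    have [e Ae he] := sup_adherent d0 hs.
    have he2 : s - d < e := he.
    have es : e <= s by apply: ub.
    have := flip e s es.
    have : (1 + K) * (s - e) < (1 + K) * d by rewrite ltr_pM2l //; lra.
    have -> : (1 + K) * d = f s - w ord0 j by rewrite /d mulrC divfK // gt_eqF.
    move: Ae; rewrite /A /= /f; lra.
  exists s; split; first exact: fs.
  move=> b hb; apply/eqP; rewrite eq_le; apply/andP; split; rewrite leNgt; apply/negP => h;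
    have := fstrict _ _ h; move: fs; rewrite /f; move: hb; rewrite /c /F; lra.
move=> a ha.
set v := \row_(k < L) (if k == j then a + c else Num.min a (w ord0 k)).
have vj : v ord0 j = a + c by rewrite mxE eqxx.
have vk : forall k, k != j -> v ord0 k = Num.min a (w ord0 k).
  by move=> k hk; rewrite mxE (negbTE hk).
split.
  move=> l hl; rewrite vj vk // lerD2r ge_min lexx //.
move=> u hu huv.
have E : forall i, (w - u) ord0 i ^+ 2 =
    (w ord0 i - v ord0 i) ^+ 2 + (v ord0 i - u ord0 i) ^+ 2
    + 2 * ((w ord0 i - v ord0 i) * (v ord0 i - u ord0 i)).
  by move=> i; rewrite !mxE; ring.
have E2 : forall i, (w - v) ord0 i ^+ 2 = (w ord0 i - v ord0 i) ^+ 2.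
  by move=> i; rewrite !mxE.
have pos : 0 < \sum_(i < L) (v ord0 i - u ord0 i) ^+ 2.
  have [i hi] : exists i, v ord0 i != u ord0 i.
    case: (boolP [exists i, v ord0 i != u ord0 i]) => [/existsP//|].
    rewrite negb_exists => /forallP hall; exfalso; apply: huv; apply/rowP => k.
    by have := hall k; rewrite negbK => /eqP ->.
  rewrite (bigD1 i) //=.
  have h1 : 0 < (v ord0 i - u ord0 i) ^+ 2.
    by rewrite lt_def sqr_ge0 andbT expf_neq0 // subr_eq0.
  have h2 : 0 <= \sum_(k < L | k != i) (v ord0 k - u ord0 k) ^+ 2.
    by apply: sumr_ge0 => k _; apply: sqr_ge0.
  lra.
have inner : 0 <= \sum_(i < L) ((w ord0 i - v ord0 i) * (v ord0 i - u ord0 i)).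
  rewrite (bigD1 j) //=.
  have dj : w ord0 j - v ord0 j = - F a by rewrite vj; move: ha; rewrite /F /=; lra.
  rewrite dj.
  have -> : \sum_(i < L | i != j) (w ord0 i - v ord0 i) * (v ord0 i - u ord0 i)
     = \sum_(i < L | i != j) pospart (w ord0 i - a) * (v ord0 i - u ord0 i).
    by apply: eq_bigr => i hi; rewrite vk // pp_min.
  rewrite /F /= mulNr mulr_suml addrC -sumrB.
  apply: sumr_ge0 => i hi.
  have := pp_min0 (w ord0 i) a; have := hu i hi; have := pp_ge0 (w ord0 i - a).
  rewrite vj vk //.
  set p := pospart (w ord0 i - a); set m := Num.min a (w ord0 i).
  move=> hp hui hpm.
  have -> : p * (m - u ord0 i) - p * (a + c - u ord0 j)
          = p * (u ord0 j - u ord0 i - c) + p * (m - a) by ring.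
  rewrite hpm addr0; apply: mulr_ge0 => //; have hui2 : u ord0 i + c <= u ord0 j := hui; lra.
have key : \sum_(i < L) (w - v) ord0 i ^+ 2 < \sum_(i < L) (w - u) ord0 i ^+ 2.
  rewrite (eq_bigr _ (fun i _ => E i)) (eq_bigr _ (fun i _ => E2 i)).
  rewrite !big_split /= -mulr_sumr; apply: (lt_le_trans (y := \sum_(i < L) (w ord0 i - v ord0 i) ^+ 2 + \sum_(i < L) (v ord0 i - u ord0 i) ^+ 2)); [by rewrite ltrDl | by rewrite lerDl mulr_ge0].
have s0 : 0 <= \sum_(i < L) (w - v) ord0 i ^+ 2 by apply: sumr_ge0 => i _; apply: sqr_ge0.
have bpos : 0 < \sum_(i < L) (w - u) ord0 i ^+ 2 by lra.
have h := ltr_sqrt (\sum_(i < L) (w - v) ord0 i ^+ 2) bpos.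
rewrite key in h; exact: h.
Qed.
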